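(* Let $Z$ be a feasible point of the SDP relaxation described in the context, with first-row data $(z_+,z_-,\rho)$, and let $(x_+^{Q},x_-^{Q},r^{Q})$ be its reconstruction, i.e. $x_\pm^{Q}=z_\pm$ and $r^{Q}=\max\{r\in[0,1]: (A_\delta z_+ + A_\delta z_- + b_\delta)\,r + A_c z_+ - A_c z_- - b_c\le 0\}$. If $(x_+^{Q},x_-^{Q})$ is a strictly efficient solution of the LP of robustness level $r^{Q}$, then $(x_+^{Q},x_-^{Q},r^{Q})$ is an efficient solution of the QCQP.
   Context: Let $k,m,n\in\mathbb{N}$. Let $A_c,A_\delta\in\mathbb{R}^{m\times n}$ with $A_\delta\ge 0$ entrywise, $b_c,b_\delta\in\mathbb{R}^m$ with $b_\delta\ge0$, $G\in\mathbb{R}^{k\times n}$, and $\ell,u\in\mathbb{R}^n$ with $\ell\le u$. All vector inequalities are componentwise. QCQP: variables $x_+,x_-\in\mathbb{R}^n_{\ge0}$, $r\in[0,1]$, subject to $A_cx_+-A_cx_-+rA_\delta x_++rA_\delta x_-+rb_\delta-b_c\le0$ and $\ell\le x_+-x_-\le u$; vector objective $F(x_+,x_-,r)=(G(x_+-x_-),-r)\in\mathbb{R}^{k+1}$, minimized in the Pareto sense. LP of robustness level $r$ (for fixed $r\in[0,1]$): variables $x_+,x_-\in\mathbb{R}^n_{\ge0}$, subject to $(A_c+rA_\delta)x_+-(A_c-rA_\delta)x_-\le b_c-rb_\delta$ and $\ell\le x_+-x_-\le u$; vector objective $G(x_+-x_-)\in\mathbb{R}^k$, minimized in the Pareto sense.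 SDP relaxation: variable a symmetric positive semidefinite matrix $Z$ of size $(2n+2)\times(2n+2)$ written in block form with row/column blocks of sizes $1,n,n,1$: $Z=\begin{pmatrix} Z_{00} & z_+^T & z_-^T & \rho\\ z_+ & * & * & w_+\\ z_- & * & * & w_-\\ \rho & w_+^T & w_-^T & \sigma\end{pmatrix}$, with $z_\pm,w_\pm\in\mathbb{R}^n$, $\rho,\sigma\in\mathbb{R}$. Constraints: $Z_{00}=1$; $A_cz_+-A_cz_-+A_\delta(w_++w_-)+\rho\, b_\delta-b_c\le0$; $\ell\le z_+-z_-\le u$; $z_+,z_-\ge0$, $\rho\ge0$, $w_+,w_-\ge0$; $\sigma\le1$. Vector objective $(G(z_+-z_-),-\rho)\in\mathbb{R}^{k+1}$, minimized in the Pareto sense. Efficiency (for minimizing a vector function $f$ over a feasible set $\mathcal{X}$): $x^*\in\mathcal{X}$ is efficient if there is no $x\in\mathcal{X}$ with $f(x)\le f(x^* )$ and $f(x)\ne f(x^* )$; weakly efficient if there is no $x\in\mathcal{X}$ with $f(x)<f(x^* )$ (all components strict); strictly efficient if there is no $x\in\mathcal{X}$, $x\neq x^*$, with $f(x)\le f(x^* )$. For $\epsilon\ge0$, $x^*$ is weakly $\epsilon$-efficient if there is no $x\in\mathcal{X}$ with $f(x)<f(x^* )-\epsilon\mathbb{1}$, where $\mathbb{1}$ is the all-ones vector. *)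

(* Defs.v *)
From mathcomp Require Import all_boot all_order all_algebra.
Set Implicit Arguments. Unset Strict Implicit. Unset Printing Implicit Defensive.
Import Order.TTheory GRing.Theory Num.Theory.
Local Open Scope ring_scope.

Section Defs.
Variable R : realFieldType.

Definition vle (p : nat) (u v : 'cV[R]_p) : Prop := forall i, u i ord0 <= v i ord0.
Definition vlt (p : nat) (u v : 'cV[R]_p) : Prop := forall i, u i ord0 < v i ord0.

Definition efficient (T : Type) (p : nat) (X : T -> Prop) (f : T -> 'cV[R]_p) (x : T) : Prop :=
  X x /\ ~ (exists y, X y /\ vle (f y) (f x) /\ f y <> f x).
Definition strictly_efficient (T : Type) (p : nat) (X : T -> Prop) (f : T -> 'cV[R]_p) (x : T) : Prop :=
  X x /\ ~ (exists y, X y /\ y <> x /\ vle (f y) (f x)).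

Variables (k m n : nat).
Variables (Ac Ad : 'M[R]_(m, n)) (bc bd : 'cV[R]_m) (G : 'M[R]_(k, n)) (l u : 'cV[R]_n).

Definition qcqp_feasible (t : 'cV[R]_n * 'cV[R]_n * R) : Prop :=
  let: (xp, xm, r) := t in
  [/\ vle 0 xp, vle 0 xm, 0 <= r <= 1,
      vle (Ac *m xp - Ac *m xm + r *: (Ad *m xp) + r *: (Ad *m xm) + r *: bd - bc) 0
    & vle l (xp - xm) /\ vle (xp - xm) u].

Definition qcqp_obj (t : 'cV[R]_n * 'cV[R]_n * R) : 'cV[R]_(k + 1) :=
  let: (xp, xm, r) := t in col_mx (G *m (xp - xm)) (const_mx (- r)).

Definition lp_feasible (r : R) (t : 'cV[R]_n * 'cV[R]_n) : Prop :=
  let: (xp, xm) := t in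
  [/\ vle 0 xp, vle 0 xm,
      vle ((Ac + r *: Ad) *m xp - (Ac - r *: Ad) *m xm) (bc - r *: bd)
    & vle l (xp - xm) /\ vle (xp - xm) u].

Definition lp_obj (t : 'cV[R]_n * 'cV[R]_n) : 'cV[R]_k :=
  let: (xp, xm) := t in G *m (xp - xm).

(* SDP relaxation: Z of size (2n+2) x (2n+2) with row/column blocks of sizes 1,n,n,1:
   index 0; indices 1..n (the "+" block); n+1..2n (the "-" block); 2n+1. *)
Definition ix_p (j : 'I_n) : 'I_(n.*2.+2) := inord (1 + j).
Definition ix_m (j : 'I_n) : 'I_(n.*2.+2) := inord (1 + n + j).
Definition ix_last : 'I_(n.*2.+2) := inord (n.*2.+1).

Definition sdp_zp (Z : 'M[R]_(n.*2.+2)) : 'cV[R]_n := \col_j Z (ix_p j) ord0.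
Definition sdp_zm (Z : 'M[R]_(n.*2.+2)) : 'cV[R]_n := \col_j Z (ix_m j) ord0.
Definition sdp_rho (Z : 'M[R]_(n.*2.+2)) : R := Z ix_last ord0.
Definition sdp_wp (Z : 'M[R]_(n.*2.+2)) : 'cV[R]_n := \col_j Z (ix_p j) ix_last.
Definition sdp_wm (Z : 'M[R]_(n.*2.+2)) : 'cV[R]_n := \col_j Z (ix_m j) ix_last.
Definition sdp_sigma (Z : 'M[R]_(n.*2.+2)) : R := Z ix_last ix_last.

Definition psd (p : nat) (M : 'M[R]_p) : Prop :=
  M^T = M /\ forall v : 'cV[R]_p, 0 <= (v^T *m M *m v) ord0 ord0.

Definition sdp_feasible (Z : 'M[R]_(n.*2.+2)) : Prop :=
  [/\ psd Z /\ Z ord0 ord0 = 1,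
      vle (Ac *m sdp_zp Z - Ac *m sdp_zm Z + Ad *m (sdp_wp Z + sdp_wm Z)
           + sdp_rho Z *: bd - bc) 0,
      vle l (sdp_zp Z - sdp_zm Z) /\ vle (sdp_zp Z - sdp_zm Z) u,
      [/\ vle 0 (sdp_zp Z), vle 0 (sdp_zm Z), 0 <= sdp_rho Z,
          vle 0 (sdp_wp Z) & vle 0 (sdp_wm Z)]
    & sdp_sigma Z <= 1].

Definition recon_ok (Z : 'M[R]_(n.*2.+2)) (r : R) : Prop :=
  0 <= r <= 1 /\
  vle (r *: (Ad *m sdp_zp Z + Ad *m sdp_zm Z + bd) + Ac *m sdp_zp Z - Ac *m sdp_zm Z - bc) 0.

Definition is_recon_r (Z : 'M[R]_(n.*2.+2)) (rQ : R) : Prop :=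
  recon_ok Z rQ /\ forall r, recon_ok Z r -> r <= rQ.

End Defs.

(* Main.v *)
Require Import Defs.
From mathcomp Require Import all_boot all_order all_algebra.
From mathcomp Require Import ring lra.
Import Order.TTheory GRing.Theory Num.Theory.
Local Open Scope ring_scope.

Lemma mul_nonneg (R : realFieldType) m n (A : 'M[R]_(m, n)) (y : 'cV[R]_n) :
  (forall i j, 0 <= A i j) -> vle 0 y -> forall i, 0 <= (A *m y) i ord0.
Proof.
move=> HA Hy i; rewrite mxE; apply: sumr_ge0 => j _; apply: mulr_ge0 => //.
by have := Hy j; rewrite mxE.
Qed.

Theorem mainTheorem1 (R : realFieldType) (k m n : nat)
  (Ac Ad : 'M[R]_(m, n)) (bc bd : 'cV[R]_m) (G : 'M[R]_(k, n)) (l u : 'cV[R]_n)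
  (HAd : forall i j, 0 <= Ad i j) (Hbd : vle 0 bd) (Hlu : vle l u)
  (Z : 'M[R]_(n.*2.+2)) (rQ : R) :
  sdp_feasible Ac Ad bc bd l u Z ->
  is_recon_r Ac Ad bc bd Z rQ ->
  strictly_efficient (lp_feasible Ac Ad bc bd l u rQ) (lp_obj G) (sdp_zp Z, sdp_zm Z) ->
  efficient (qcqp_feasible Ac Ad bc bd l u) (qcqp_obj G) (sdp_zp Z, sdp_zm Z, rQ).
Proof.
move=> [_ _ Hb [Hzp Hzm _ _ _] _] [[Hr Hrec] Hmax] [_ Hse].
set zp := sdp_zp Z in Hb Hzp Hzm Hrec Hmax Hse *.
set zm := sdp_zm Z in Hb Hzp Hzm Hrec Hmax Hse *.
split.
  split => //.
  move=> i; have := Hrec i.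
  set a := (Ac *m zp); set b := (Ac *m zm).
  set c := (Ad *m zp); set d := (Ad *m zm).
  rewrite !mxE => H; lra.
move=> [[[yp ym] r] [[Hyp Hym Hr' Hc Hyb] [Hle Hne]]].
have HG : vle (G *m (yp - ym)) (G *m (zp - zm)).
  move=> i; have := Hle (lshift 1 i); by rewrite /= !col_mxEu.
have Hrr : rQ <= r.
  have := Hle (rshift k ord0); rewrite /= !col_mxEd !mxE; lra.
have Hlp : lp_feasible Ac Ad bc bd l u rQ (yp, ym).
  split => // i; have := Hc i.
  have h1 := @mul_nonneg _ _ _ Ad yp HAd Hyp i; have h2 := @mul_nonneg _ _ _ Ad ym HAd Hym i.
  have h3 := Hbd i.
  rewrite mulmxDl mulmxBl -!scalemxAl.
  move: h1 h2 h3.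
  set a := (Ac *m yp); set b := (Ac *m ym).
  set c := (Ad *m yp); set d := (Ad *m ym).
  rewrite !mxE => h1 h2 h3 H; nra.
have Heq : (yp, ym) = (zp, zm).
  case: (boolP ((yp, ym) == (zp, zm))) => [/eqP //|/eqP hne].
  by exfalso; apply: Hse; exists (yp, ym).
case: Heq => Hp Hm; subst yp ym.
have Hok : recon_ok Ac Ad bc bd Z r.
  split => // i; have := Hc i.
  set a := (Ac *m zp); set b := (Ac *m zm).
  set c := (Ad *m zp); set d := (Ad *m zm).
  rewrite !mxE => H; lra.
have := Hmax r Hok => Hr2.
have Hrq : r = rQ by lra.
subst r.
by apply: Hne.
Qed.
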